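(* Let $(N,+,* )$ be a planar nearring presented by $(\Phi,R,M)$, and let $d\in D(N)$ be nonzero and not a zero multiplier, written $d=r_d\phi_d$ with $r_d\in R\setminus M$, $\phi_d\in\Phi$. Then $\{\phi\in\Phi : r_d\phi\in D(N)\}$ is a subgroup of $\Phi$, and it contains $Z(\Phi)$.
   Context: A (right) nearring $(N,+,* )$ is a set with a group $(N,+)$ (identity $0$, not necessarily abelian), a semigroup $(N,* )$, and right distributivity $(a+b)*c=a*c+b*c$ for all $a,b,c$. $N$ is planar if the relation $a\cong b$ ($x*a=x*b$ for all $x$) has at least $3$ classes and for all $a,b,c$ with $a\not\cong b$ the equation $x*a=x*b+c$ has a unique solution. Every planar nearring arises as follows, and we always consider it so presented. $\Phi\le \mathrm{Aut}(N,+)$ acts on the right, is fixed point free (for $\phi\ne\mathrm{id}$, $n\phi=n$ iff $n=0$), and $n\mapsto -n+n\phi$ is bijective for each $\phi\ne\mathrm{id}$. $R$ is a set of representatives of the $\Phi$-orbits of $N\setminus\{0\}$ and $M\subseteq R$. Each $a\ne0$ is uniquely $a=r_a\phi_a$ with $r_a\in R$, $\phi_a\in\Phi$. Multiplication: $a*b=0$ if $b=0$ or $r_b\in M$, else $a*b=a\phi_b$ (and $0*b=0$). The zero multipliers are the elements of $M\Phi\cup\{0\}$, i.e. those $n$ with $x*n=0$ for all $x$. $D(N)=\{n: n*(a+b)=n*a+n*b\ \forall a,b\}$. $Z(\Phi)$ is the centre of $\Phi$. *)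

(* Defs.v *)
Set Implicit Arguments.

Definition is_group {G : Type} (op : G -> G -> G) (e : G) (inv : G -> G) : Prop :=
  (forall x y z, op x (op y z) = op (op x y) z) /\
  (forall x, op e x = x) /\ (forall x, op x e = x) /\
  (forall x, op (inv x) x = e) /\ (forall x, op x (inv x) = e).

Definition bijective_map {A B : Type} (f : A -> B) : Prop :=
  (forall x y, f x = f y -> x = y) /\ (forall y, exists x, f x = y).

Definition is_subgroup {G : Type} (op : G -> G -> G) (e : G) (inv : G -> G)
  (S : G -> Prop) : Prop :=
  S e /\ (forall x y, S x -> S y -> S (op x y)) /\ (forall x, S x -> S (inv x)).

Definition center {G : Type} (op : G -> G -> G) (z : G) : Prop :=
  forall x, op z x = op x z.

Definition is_nearring {N : Type} (add : N -> N -> N) (zero : N) (opp : N -> N)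
  (mul : N -> N -> N) : Prop :=
  is_group add zero opp /\
  (forall a b c, mul a (mul b c) = mul (mul a b) c) /\
  (forall a b c, mul (add a b) c = add (mul a c) (mul b c)).

Definition nr_equiv {N : Type} (mul : N -> N -> N) (a b : N) : Prop :=
  forall x, mul x a = mul x b.

Definition is_planar_nearring {N : Type} (add : N -> N -> N) (zero : N) (opp : N -> N)
  (mul : N -> N -> N) : Prop :=
  is_nearring add zero opp mul /\
  (exists a b c, ~ nr_equiv mul a b /\ ~ nr_equiv mul a c /\ ~ nr_equiv mul b c) /\
  (forall a b c, ~ nr_equiv mul a b ->
     exists x, mul x a = add (mul x b) c /\
       forall y, mul y a = add (mul y b) c -> y = x).

(* Phi (a group (Phi, comp, id, inv)) is presented as a group of automorphisms
   of (N, add) acting on the right via act : n |-> n phi; the action is faithful,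
   so Phi is identified with a subgroup of Aut(N,+). *)
Definition is_ferrero_pair {N Phi : Type} (add : N -> N -> N) (zero : N) (opp : N -> N)
  (comp : Phi -> Phi -> Phi) (id : Phi) (inv : Phi -> Phi) (act : N -> Phi -> N) : Prop :=
  is_group add zero opp /\ is_group comp id inv /\
  (forall a b phi, act (add a b) phi = add (act a phi) (act b phi)) /\
  (forall n, act n id = n) /\
  (forall n phi psi, act n (comp phi psi) = act (act n phi) psi) /\
  (forall phi psi, (forall n, act n phi = act n psi) -> phi = psi) /\
  (forall phi n, phi <> id -> act n phi = n -> n = zero) /\
  (forall phi, phi <> id -> bijective_map (fun n => add (opp n) (act n phi))).

Definition is_orbit_reps {N Phi : Type} (zero : N) (act : N -> Phi -> N)
  (R M : N -> Prop) : Prop :=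
  (forall r, R r -> r <> zero) /\
  (forall a, a <> zero -> exists r phi, R r /\ a = act r phi) /\
  (forall r1 r2 phi, R r1 -> R r2 -> r1 = act r2 phi -> r1 = r2) /\
  (forall r, M r -> R r).

Definition is_presented_mul {N Phi : Type} (zero : N) (act : N -> Phi -> N)
  (R M : N -> Prop) (mul : N -> N -> N) : Prop :=
  (forall a, mul a zero = zero) /\
  (forall a r phi, R r -> M r -> mul a (act r phi) = zero) /\
  (forall a r phi, R r -> ~ M r -> mul a (act r phi) = act a phi).

Definition distributive_elt {N : Type} (add : N -> N -> N) (mul : N -> N -> N) (n : N) : Prop :=
  forall a b, mul n (add a b) = add (mul n a) (mul n b).

Definition zero_multiplier {N : Type} (zero : N) (mul : N -> N -> N) (n : N) : Prop :=
  forall x, mul x n = zero.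

(* Main.v *)
Require Import Defs.
From Stdlib Require Import Classical.

Theorem mainTheorem2 (N Phi : Type)
  (add : N -> N -> N) (zero : N) (opp : N -> N) (mul : N -> N -> N)
  (comp : Phi -> Phi -> Phi) (id : Phi) (inv : Phi -> Phi) (act : N -> Phi -> N)
  (R M : N -> Prop)
  (Hpair : is_ferrero_pair add zero opp comp id inv act)
  (Hreps : is_orbit_reps zero act R M)
  (Hmul : is_presented_mul zero act R M mul)
  (Hplanar : is_planar_nearring add zero opp mul)
  (d : N) (Hd : distributive_elt add mul d) (Hd0 : d <> zero)
  (Hdz : ~ zero_multiplier zero mul d)
  (rd : N) (phid : Phi) (Hrd : R rd) (Hrd' : ~ M rd) (Hdrep : d = act rd phid) :
  is_subgroup comp id inv (fun phi => distributive_elt add mul (act rd phi)) /\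
  (forall z, center comp z -> distributive_elt add mul (act rd z)).
Proof.
  destruct Hpair as [Hgadd [Hgphi [Hactadd [Hactid [Hactcomp _]]]]].
  destruct Hgadd as [Aassoc [Al0 [Ar0 [AlV ArV]]]].
  destruct Hgphi as [Cassoc [Cl0 [Cr0 [ClV CrV]]]].
  destruct Hplanar as [[_ [Hassoc _]] _].
  destruct Hmul as [Hm0 [HmM HmR]].
  destruct Hreps as [_ [Hcover _]].
  assert (mulrd : forall x, mul x rd = x).
  { intro x. assert (H := HmR x rd id Hrd Hrd'). rewrite !Hactid in H. exact H. }
  assert (red : forall x a, mul x a = mul x (mul rd a)).
  { intros x a. rewrite Hassoc, mulrd. reflexivity. }
  assert (nmul : forall p q, mul (act rd p) (act rd q) = act rd (comp p q)).
  { intros p q. rewrite HmR by assumption. rewrite Hactcomp. reflexivity. }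
  assert (act0 : forall p, act zero p = zero).
  { intro p. assert (H := Hactadd zero zero p). rewrite Al0 in H.
    set (u := act zero p) in *.
    assert (H2 : add (opp u) u = add (opp u) (add u u)) by (rewrite <- H; reflexivity).
    rewrite Aassoc, AlV, Al0 in H2. symmetry; exact H2. }
  assert (Dmul : forall u v, distributive_elt add mul u -> distributive_elt add mul v ->
     distributive_elt add mul (mul u v)).
  { intros u v Hu Hv a b. rewrite <- !Hassoc. rewrite Hv, Hu. reflexivity. }
  assert (G : forall p, distributive_elt add mul (act rd p) ->
            distributive_elt add mul rd /\ distributive_elt add mul (act rd (inv p))).
  { intros p He.
    set (e := act rd p) in *. set (y := act rd (inv p)).
    assert (ey : mul e y = rd) by (unfold e, y; rewrite nmul, CrV, Hactid; reflexivity).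
    assert (ye : mul y e = rd) by (unfold e, y; rewrite nmul, ClV, Hactid; reflexivity).
    assert (rde : mul rd e = e) by (unfold e; rewrite HmR by assumption; reflexivity).
    set (K := fun k => exists z, k = mul e z).
    assert (Kid : forall k, K k -> mul rd k = k).
    { intros k [z ->]. rewrite Hassoc, rde. reflexivity. }
    assert (Kcl : forall k1 k2, K k1 -> K k2 -> K (add k1 k2)).
    { intros k1 k2 [z1 ->] [z2 ->]. exists (add z1 z2). rewrite He. reflexivity. }
    assert (Krd : forall a, K (mul rd a)).
    { intro a. exists (mul y a). rewrite Hassoc, ey. reflexivity. }
    assert (Ky : forall k, K k -> K (mul y k)).
    { intros k [z ->]. rewrite Hassoc, ye. apply Krd. }
    assert (Kback : forall k, K k -> mul e (mul y k) = k).
    { intros k Hk. rewrite Hassoc, ey. apply Kid, Hk. }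
    assert (yadd : forall k1 k2, K k1 -> K k2 -> mul y (add k1 k2) = add (mul y k1) (mul y k2)).
    { intros k1 k2 H1 H2.
      assert (Hs : add k1 k2 = mul e (add (mul y k1) (mul y k2)))
        by (rewrite He, !Kback by assumption; reflexivity).
      rewrite Hs, Hassoc, ye. apply Kid, Kcl; apply Ky; assumption. }
    assert (Drd : distributive_elt add mul rd).
    { intros a b. rewrite <- ye. rewrite <- !Hassoc. rewrite He.
      apply yadd; [exists a | exists b]; reflexivity. }
    split; [exact Drd|].
    intros a b. rewrite (red y (add a b)), Drd, yadd by apply Krd.
    rewrite <- !red. reflexivity. }
  assert (Drd : distributive_elt add mul rd).
  { apply (G phid). rewrite <- Hdrep. exact Hd. }
  split.
  - split; [|split].
    + rewrite Hactid. exact Drd.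
    + intros p q Hp Hq. rewrite <- nmul. apply Dmul; assumption.
    + intros p Hp. apply (G p Hp).
  - intros z Hz.
    assert (cm : forall x c, mul (act x z) c = act (mul x c) z).
    { intros x c. destruct (classic (c = zero)) as [->|Hc].
      - rewrite !Hm0, act0. reflexivity.
      - destruct (Hcover c Hc) as [r [q [Hr ->]]].
        destruct (classic (M r)) as [HM|HM].
        + rewrite !HmM by assumption. rewrite act0. reflexivity.
        + rewrite !HmR by assumption. rewrite <- !Hactcomp, Hz. reflexivity. }
    intros a b. rewrite !cm, Drd, Hactadd. reflexivity.
Qed.
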